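(* Let $\Lambda$ be a set and let $(\mathfrak{S},\lambda,\parallel,\Gamma,\gamma)$ be a composition-order invariant $\Lambda$-system algebra such that $\Gamma(s)\supseteq\{\{i,i'\}\mid i,i'\in\lambda(s),\ i\neq i'\}$ for all $s\in\mathfrak{S}$. Let $s_0,s_1,r_1,r_2\in\mathfrak{S}$ be such that $\lambda(s_0),\lambda(s_1),\lambda(r_1),\lambda(r_2)$ are pairwise disjoint, and let $s_0^1,s_0^2\in\lambda(s_0)$, $s_1^1,s_1^2\in\lambda(s_1)$, $r_1^1,r_1^2\in\lambda(r_1)$, $r_2^1,r_2^2\in\lambda(r_2)$ be eight distinct interface labels. Define $\mathcal{S}_0:=\{\gamma_{r_1^2,e^2}(\gamma_{s_0^2,e^1}(\gamma_{s_0^1,r_1^1}(s_0\parallel r_1\parallel e)))\mid e\in\mathfrak{S},\ \lambda(e)\cap\lambda(s_0)=\emptyset=\lambda(e)\cap\lambda(r_1),\ e^1,e^2\in\lambda(e),\ e^1\neq e^2\}$, $\mathcal{S}_1:=\{\gamma_{e^2,r_2^2}(\gamma_{s_1^2,r_2^1}(\gamma_{s_1^1,e^1}(s_1\parallel e\parallel r_2)))\mid e\in\mathfrak{S},\ \lambda(e)\cap\lambda(s_1)=\emptyset=\lambda(e)\cap\lambda(r_2),\ e^1,e^2\in\lambda(e),\ e^1\neq e^2\}$, $\mathcal{S}_{=}:=\{\gamma_{r_1^2,r_2^2}(\gamma_{e^2,r_2^1}(\gamma_{e^1,r_1^1}(e\parallel r_1\parallel r_2)))\mid e\in\mathfrak{S},\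 \lambda(e)\cap\lambda(r_1)=\emptyset=\lambda(e)\cap\lambda(r_2),\ e^1,e^2\in\lambda(e),\ e^1\neq e^2\}$. Then $\mathcal{S}_0\cap\mathcal{S}_1\cap\mathcal{S}_{=}\neq\emptyset$.
   Context: A $\Lambda$-system algebra $(\mathfrak{S},\lambda,\parallel,\Gamma,\gamma)$ consists of a set $\mathfrak{S}$ (systems), a function $\lambda:\mathfrak{S}\to\mathcal{P}(\Lambda)$ with $\lambda(s)$ finite for all $s$, a partial binary operation $\parallel$ on $\mathfrak{S}$, a function $\Gamma$ assigning to each system $s$ a set $\Gamma(s)$ of unordered pairs $\{i,i'\}$ with $i,i'\in\lambda(s)$, and a partial function $\gamma$ mapping a pair $\{i,i'\}$ and a system $s$ to a system $\gamma_{i,i'}(s)$, such that: $s_1\parallel s_2$ is defined iff $\lambda(s_1)\cap\lambda(s_2)=\emptyset$, in which case $\lambda(s_1\parallel s_2)=\lambda(s_1)\cup\lambda(s_2)$ and for $j\in\{1,2\}$ and $i,i'\in\lambda(s_j)$ one has $\{i,i'\}\in\Gamma(s_1\parallel s_2)\iff\{i,i'\}\in\Gamma(s_j)$; and $\gamma_{i,i'}(s)$ is defined iff $\{i,i'\}\in\Gamma(s)$, in which case $\lambda(\gamma_{i,i'}(s))=\lambda(s)\setminus\{i,i'\}$. $\Gamma$ permits reordering if for all $s$, $\{i,i'\}\in\Gamma(s)$ and $\{j,j'\}\in\Gamma(\gamma_{i,i'}(s))$ we have $\{j,j'\}\in\Gamma(s)$ and $\{i,i'\}\in\Gamma(\gamma_{j,j'}(s))$.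 The algebra is connection-order invariant if $\Gamma$ permits reordering and moreover $\gamma_{j,j'}(\gamma_{i,i'}(s))=\gamma_{i,i'}(\gamma_{j,j'}(s))$ in that situation. It is composition-order invariant if it is connection-order invariant, $\parallel$ is associative and commutative (so parentheses in multiple parallel compositions are irrelevant), and for all $s_1,s_2$ with $\lambda(s_1)\cap\lambda(s_2)=\emptyset$ and $\{i,i'\}\in\Gamma(s_1)$ we have $\gamma_{i,i'}(s_1)\parallel s_2=\gamma_{i,i'}(s_1\parallel s_2)$. *)

(* Defs.v *)
From Stdlib Require Import List.
Import ListNotations.
Set Implicit Arguments.

Definition obind {A B : Type} (o : option A) (f : A -> option B) : option B :=
  match o with Some a => f a | None => None end.

(* A Lambda-system algebra (S, lambda, ||, Gamma, gamma) over the label set L.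
   - [lam s i] : i belongs to lambda(s) (a finite subset of L);
   - [par s1 s2] : the partial parallel composition (None = undefined);
   - [Gam s i i'] : the unordered pair {i,i'} belongs to Gamma(s)
     (symmetric relation, pairs of labels of s);
   - [gam i i' s] : gamma_{i,i'}(s) (None = undefined), symmetric in i,i'. *)
Record SysAlg (L : Type) := {
  sys :> Type;
  lam : sys -> L -> Prop;
  par : sys -> sys -> option sys;
  Gam : sys -> L -> L -> Prop;
  gam : L -> L -> sys -> option sys;
  lam_finite : forall s, exists l : list L, forall i, lam s i <-> In i l;
  Gam_sym : forall s i i', Gam s i i' -> Gam s i' i;
  Gam_labels : forall s i i', Gam s i i' -> lam s i /\ lam s i';
  gam_sym : forall i i' s, gam i i' s = gam i' i s;
  par_defined : forall s1 s2,
    (exists t, par s1 s2 = Some t) <-> (forall i, lam s1 i -> lam s2 i -> False);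
  par_lam : forall s1 s2 t, par s1 s2 = Some t ->
    forall i, lam t i <-> (lam s1 i \/ lam s2 i);
  par_Gam1 : forall s1 s2 t, par s1 s2 = Some t ->
    forall i i', lam s1 i -> lam s1 i' -> (Gam t i i' <-> Gam s1 i i');
  par_Gam2 : forall s1 s2 t, par s1 s2 = Some t ->
    forall i i', lam s2 i -> lam s2 i' -> (Gam t i i' <-> Gam s2 i i');
  gam_defined : forall i i' s,
    (exists t, gam i i' s = Some t) <-> Gam s i i';
  gam_lam : forall i i' s t, gam i i' s = Some t ->
    forall j, lam t j <-> (lam s j /\ j <> i /\ j <> i')
}.

Arguments lam {L A} _ _ : rename.
Arguments par {L A} _ _ : rename.
Arguments Gam {L A} _ _ _ : rename.
Arguments gam {L A} _ _ _ : rename.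

Section Props.
Variables (L : Type) (A : SysAlg L).

Definition permits_reordering : Prop :=
  forall (s t : A) i i' j j',
    Gam s i i' -> gam i i' s = Some t -> Gam t j j' ->
    Gam s j j' /\ (forall u, gam j j' s = Some u -> Gam u i i').

Definition connection_order_invariant : Prop :=
  permits_reordering /\
  forall (s t : A) i i' j j',
    Gam s i i' -> gam i i' s = Some t -> Gam t j j' ->
    obind (gam i i' s) (gam j j') = obind (gam j j' s) (gam i i').

Definition par_assoc : Prop :=
  forall a b c : A,
    obind (par a b) (fun ab => par ab c) = obind (par b c) (fun bc => par a bc).

Definition par_comm : Prop := forall a b : A, par a b = par b a.

Definition composition_order_invariant : Prop :=
  connection_order_invariant /\ par_assoc /\ par_comm /\
  forall (s1 s2 : A) i i',
    (forall j, lam s1 j -> lam s2 j -> False) -> Gam s1 i i' ->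
    obind (gam i i' s1) (fun t => par t s2) = obind (par s1 s2) (gam i i').

Definition disj (a b : A) : Prop := forall j, lam a j -> lam b j -> False.

(* s0 || r1 || e, associated to the left (irrelevant by associativity) *)
Definition par3 (a b c : A) : option A := obind (par a b) (fun ab => par ab c).

End Props.
Arguments disj {L A} _ _.
Arguments par3 {L A} _ _ _.
Arguments composition_order_invariant {L} A.
Arguments connection_order_invariant {L} A.

(* Main.v *)
Require Import Defs.
From Stdlib Require Import List Permutation FunctionalExtensionality.
Import ListNotations.

Fixpoint gams {L} {A : SysAlg L} (l : list (L*L)) (s : A) : option A :=
  match l with
  | [] => Some s
  | p :: l' => obind (gam (fst p) (snd p) s) (gams l')
  end.

Definition flat {L} (l : list (L*L)) : list L := flat_map (fun p => [fst p; snd p]) l.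

Lemma obind_assoc {X Y Z : Type} (o : option X) (f : X -> option Y) (g : Y -> option Z) :
  obind (obind o f) g = obind o (fun a => obind (f a) g).
Proof. destruct o; reflexivity. Qed.

Lemma lpl {L} {A : SysAlg L} (a b t : A) i : par a b = Some t -> lam a i -> lam t i.
Proof. intros H Hi. apply (proj2 (par_lam A a b H i)). auto. Qed.
Lemma lpr {L} {A : SysAlg L} (a b t : A) i : par a b = Some t -> lam b i -> lam t i.
Proof. intros H Hi. apply (proj2 (par_lam A a b H i)). auto. Qed.
Lemma lpinv {L} {A : SysAlg L} (a b t : A) i : par a b = Some t -> lam t i -> lam a i \/ lam b i.
Proof. intros H Hi. apply (proj1 (par_lam A a b H i)). auto. Qed.
Lemma lg {L} {A : SysAlg L} i i' (s t : A) j : gam i i' s = Some t -> lam s j -> j <> i -> j <> i' -> lam t j.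
Proof. intros H ? ? ?. apply (proj2 (gam_lam A i i' s H j)). auto. Qed.
Lemma lginv {L} {A : SysAlg L} i i' (s t : A) j : gam i i' s = Some t -> lam t j -> lam s j.
Proof. intros H Hj. apply (proj1 (gam_lam A i i' s H j)) in Hj. tauto. Qed.

Lemma disj_sym {L} {A : SysAlg L} (a b : A) : disj a b -> disj b a.
Proof. unfold disj; eauto. Qed.
Lemma disj_par {L} {A : SysAlg L} (a b t c : A) : par a b = Some t -> disj a c -> disj b c -> disj t c.
Proof. unfold disj; intros H H1 H2 j Hj Hc. destruct (lpinv _ _ _ _ H Hj); eauto. Qed.
Lemma disj_gam {L} {A : SysAlg L} i i' (s t c : A) : gam i i' s = Some t -> disj s c -> disj t c.
Proof. unfold disj; intros H H1 j Hj Hc. eapply H1; eauto. eapply lginv; eauto. Qed.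
Lemma par_some {L} {A : SysAlg L} (a b : A) : disj a b -> exists t, par a b = Some t.
Proof. intros H. apply par_defined. exact H. Qed.

Lemma gam_some {L} {A : SysAlg L}
  (HGam : forall (s : A) i i', lam s i -> lam s i' -> i <> i' -> Gam s i i')
  (s : A) a b : lam s a -> lam s b -> a <> b -> exists t, gam a b s = Some t.
Proof. intros. apply (proj2 (gam_defined A a b s)). auto. Qed.

Lemma swap {L} {A : SysAlg L} (HA : composition_order_invariant A)
  (HGam : forall (s : A) i i', lam s i -> lam s i' -> i <> i' -> Gam s i i')
  (s : A) a b c d : lam s a -> lam s b -> lam s c -> lam s d -> NoDup [a;b;c;d] ->
  obind (gam a b s) (gam c d) = obind (gam c d s) (gam a b).
Proof.
  intros ha hb hc hd nd.
  destruct HA as [[_ Hc] _].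
  inversion nd as [|? ? n1 nd1]; subst. inversion nd1 as [|? ? n2 nd2]; subst.
  inversion nd2 as [|? ? n3 nd3]; subst. simpl in *.
  assert (nab : a <> b) by (intro; subst; tauto).
  destruct (gam_some HGam s a b ha hb nab) as [t Ht].
  apply (Hc s t a b c d).
  - apply HGam; auto.
  - exact Ht.
  - apply HGam; try (eapply lg; eauto; intro; subst; tauto). intro; subst; tauto.
Qed.

Lemma gams_defined {L} {A : SysAlg L}
  (HGam : forall (s : A) i i', lam s i -> lam s i' -> i <> i' -> Gam s i i') :
  forall l (s : A), (forall i, In i (flat l) -> lam s i) -> NoDup (flat l) ->
  exists t, gams l s = Some t.
Proof.
  induction l as [|[a b] l IH]; intros s Hin Hnd; simpl in *.
  - eauto.
  - inversion Hnd as [|? ? n1 nd1]; subst. inversion nd1 as [|? ? n2 nd2]; subst.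
    destruct (gam_some HGam s a b) as [t Ht]; auto. intro; subst; simpl in *; tauto.
    rewrite Ht; simpl. apply IH; auto.
    intros i Hi. eapply lg; eauto. intro; subst; simpl in *; tauto.
    intro; subst; tauto.
Qed.

Lemma flat_perm {L} (l l' : list (L*L)) : Permutation l l' -> Permutation (flat l) (flat l').
Proof.
  induction 1; simpl.
  - constructor.
  - do 2 apply perm_skip; auto.
  - change (Permutation ([fst y;snd y] ++ [fst x;snd x] ++ flat l) ([fst x;snd x] ++ [fst y;snd y] ++ flat l)).
    rewrite !app_assoc. apply Permutation_app_tail. apply Permutation_app_comm.
  - eapply perm_trans; eauto.
Qed.

Lemma gams_perm {L} {A : SysAlg L} (HA : composition_order_invariant A)
  (HGam : forall (s : A) i i', lam s i -> lam s i' -> i <> i' -> Gam s i i') :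
  forall l l', Permutation l l' -> forall (s : A),
  (forall i, In i (flat l) -> lam s i) -> NoDup (flat l) -> gams l s = gams l' s.
Proof.
  induction 1 as [|[a b] l l' P IH|[a b] [c d] l|l l' l'' P1 IH1 P2 IH2];
    intros s Hin Hnd; simpl in *.
  - reflexivity.
  - inversion Hnd as [|? ? n1 nd1]; subst. inversion nd1 as [|? ? n2 nd2]; subst.
    destruct (gam a b s) as [t|] eqn:Ht; simpl; auto.
    apply IH; auto. intros i Hi. apply (lg a b s t i Ht).
    + apply Hin; auto.
    + intro; subst; simpl in *; tauto.
    + intro; subst; simpl in *; tauto.
  - rewrite <- !obind_assoc. f_equal. apply (swap HA HGam); try (apply Hin; tauto).
    simpl in Hnd.
    inversion Hnd as [|? ? n1 nd1]; subst. inversion nd1 as [|? ? n2 nd2]; subst.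
    inversion nd2 as [|? ? n3 nd3]; subst. inversion nd3 as [|? ? n4 nd4]; subst.
    repeat constructor; simpl in *; intuition.
  - rewrite (IH1 s Hin Hnd). apply IH2.
    intros i Hi. apply Hin. eapply Permutation_in; [apply Permutation_sym, flat_perm; eauto|]; auto.
    eapply Permutation_NoDup; [apply flat_perm; eauto|]; auto.
Qed.

Lemma chain4 {L} {A : SysAlg L} (s : A) a b c d e f g h :
  obind (obind (obind (gam a b s) (gam c d)) (gam e f)) (gam g h) =
  gams [(a,b);(c,d);(e,f);(g,h)] s.
Proof.
  simpl. destruct (gam a b s); simpl; auto. destruct (gam c d s0); simpl; auto.
  destruct (gam e f s1); simpl; auto. destruct (gam g h s2); simpl; auto.
Qed.

Lemma par_gam_cor {L} {A : SysAlg L} (HA : composition_order_invariant A)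
  (a b a' ab : A) i i' : disj a b -> Gam a i i' -> gam i i' a = Some a' ->
  par a b = Some ab -> par a' b = gam i i' ab.
Proof.
  intros D G H1 H2. destruct HA as [_ [_ [_ Hp]]].
  pose proof (Hp a b i i' D G) as E. rewrite H1, H2 in E. exact E.
Qed.

Lemma gam_sym_fun {L} {A : SysAlg L} (i j : L) : (gam i j : A -> option A) = gam j i.
Proof. apply functional_extensionality; intro; apply gam_sym. Qed.

Ltac neq := let H := fresh in intro H; subst; simpl in *; tauto.
Ltac lamt := eauto 10 using lpl, lpr.
Ltac flat_in := let i := fresh "i" in let Hi := fresh "Hi" in
  intros i Hi; simpl in Hi; intuition (subst; assumption).
Ltac nodup := simpl; repeat (constructor; [simpl; intuition congruence|]); constructor.

Theorem theorem3p3 (L : Type) (A : SysAlg L)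
  (HA : composition_order_invariant A)
  (HGam : forall (s : A) i i', lam s i -> lam s i' -> i <> i' -> Gam s i i')
  (s0 s1 r1 r2 : A)
  (d01 : disj s0 s1) (d0r1 : disj s0 r1) (d0r2 : disj s0 r2)
  (d1r1 : disj s1 r1) (d1r2 : disj s1 r2) (dr1r2 : disj r1 r2)
  (s01 s02 s11 s12 r11 r12 r21 r22 : L)
  (h01 : lam s0 s01) (h02 : lam s0 s02) (h11 : lam s1 s11) (h12 : lam s1 s12)
  (hr11 : lam r1 r11) (hr12 : lam r1 r12) (hr21 : lam r2 r21) (hr22 : lam r2 r22)
  (hdist : NoDup [s01; s02; s11; s12; r11; r12; r21; r22]) :
  exists x : A,
    (exists (e : A) (e1 e2 : L), disj e s0 /\ disj e r1 /\
       lam e e1 /\ lam e e2 /\ e1 <> e2 /\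
       obind (obind (obind (par3 s0 r1 e) (gam s01 r11)) (gam s02 e1)) (gam r12 e2)
         = Some x) /\
    (exists (e : A) (e1 e2 : L), disj e s1 /\ disj e r2 /\
       lam e e1 /\ lam e e2 /\ e1 <> e2 /\
       obind (obind (obind (par3 s1 e r2) (gam s11 e1)) (gam s12 r21)) (gam e2 r22)
         = Some x) /\
    (exists (e : A) (e1 e2 : L), disj e r1 /\ disj e r2 /\
       lam e e1 /\ lam e e2 /\ e1 <> e2 /\
       obind (obind (obind (par3 e r1 r2) (gam e1 r11)) (gam e2 r21)) (gam r12 r22)
         = Some x).
Proof.
  pose proof HA as [_ [Hassoc [Hcomm _]]].
  pose proof hdist as nd.
  inversion nd as [|? ? n1 nd1]; subst. inversion nd1 as [|? ? n2 nd2]; subst.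
  inversion nd2 as [|? ? n3 nd3]; subst. inversion nd3 as [|? ? n4 nd4]; subst.
  inversion nd4 as [|? ? n5 nd5]; subst. inversion nd5 as [|? ? n6 nd6]; subst.
  inversion nd6 as [|? ? n7 nd7]; subst. simpl in n1, n2, n3, n4, n5, n6, n7.
  clear nd nd1 nd2 nd3 nd4 nd5 nd6 nd7.
  destruct (par_some s0 r1 d0r1) as [q0 Hq0].
  assert (dq0s1 : disj q0 s1) by (apply (disj_par _ _ _ _ Hq0); auto using disj_sym).
  assert (dq0r2 : disj q0 r2) by (apply (disj_par _ _ _ _ Hq0); auto using disj_sym).
  destruct (par_some q0 s1 dq0s1) as [q1 Hq1].
  assert (dq1r2 : disj q1 r2) by (apply (disj_par _ _ _ _ Hq1); auto using disj_sym).
  destruct (par_some q1 r2 dq1r2) as [W HW].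
  assert (lW01 : lam W s01) by lamt.
  assert (lW02 : lam W s02) by lamt.
  assert (lW11 : lam W s11) by lamt.
  assert (lW12 : lam W s12) by lamt.
  assert (lW21 : lam W r11) by lamt.
  assert (lW22 : lam W r12) by lamt.
  assert (lW31 : lam W r21) by lamt.
  assert (lW32 : lam W r22) by lamt.
  set (Lc := [(s01,r11);(s02,s11);(s12,r21);(r12,r22)]).
  destruct (gams_defined HGam Lc W) as [x Hx]; [unfold Lc; flat_in | unfold Lc; nodup |].
  exists x. split; [|split].
  -
    destruct (par_some s1 r2 d1r2) as [p Hp].
    destruct (gam_some HGam p s12 r21) as [e He]; [lamt|lamt|neq|].
    exists e, s11, r22.
    assert (dps0 : disj p s0) by (apply (disj_par _ _ _ _ Hp); auto using disj_sym).
    assert (dpr1 : disj p r1) by (apply (disj_par _ _ _ _ Hp); auto using disj_sym).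
    split; [exact (disj_gam _ _ _ _ _ He dps0)|].
    split; [exact (disj_gam _ _ _ _ _ He dpr1)|].
    split; [apply (lg _ _ _ _ _ He); [lamt|neq|neq]|].
    split; [apply (lg _ _ _ _ _ He); [lamt|neq|neq]|].
    split; [neq|].
    unfold par3. rewrite Hq0. simpl.
    assert (E : par q0 e = gam s12 r21 W).
    { rewrite Hcomm. apply (par_gam_cor HA p q0 e W s12 r21).
      - apply (disj_par _ _ _ _ Hp); apply disj_sym; auto.
      - apply HGam; [lamt|lamt|neq].
      - exact He.
      - rewrite Hcomm. pose proof (Hassoc q0 s1 r2) as E. rewrite Hq1, Hp in E.
        simpl in E. rewrite <- E. exact HW. }
    rewrite E, chain4.
    rewrite (gams_perm HA HGam _ Lc); [exact Hx| | flat_in | nodup].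
    unfold Lc. eapply perm_trans; [apply perm_swap|]. apply perm_skip, perm_swap.
  -
    destruct (gam_some HGam q0 s01 r11) as [e He]; [lamt|lamt|neq|].
    exists e, s02, r12.
    split; [exact (disj_gam _ _ _ _ _ He dq0s1)|].
    split; [exact (disj_gam _ _ _ _ _ He dq0r2)|].
    split; [apply (lg _ _ _ _ _ He); [lamt|neq|neq]|].
    split; [apply (lg _ _ _ _ _ He); [lamt|neq|neq]|].
    split; [neq|].
    unfold par3.
    assert (E1 : par s1 e = gam s01 r11 q1).
    { rewrite Hcomm. apply (par_gam_cor HA q0 s1 e q1 s01 r11); auto.
      apply HGam; [lamt|lamt|neq]. }
    rewrite E1.
    destruct (gam_some HGam q1 s01 r11) as [f Hf]; [lamt|lamt|neq|].
    rewrite Hf; simpl.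
    assert (E2 : par f r2 = gam s01 r11 W).
    { apply (par_gam_cor HA q1 r2 f W s01 r11); auto.
      apply HGam; [lamt|lamt|neq]. }
    rewrite E2, (gam_sym_fun s11 s02), chain4. exact Hx.
  -
    destruct (par_some s0 s1 d01) as [m Hm].
    destruct (gam_some HGam m s02 s11) as [e He]; [lamt|lamt|neq|].
    exists e, s01, s12.
    assert (dmr1 : disj m r1) by (apply (disj_par _ _ _ _ Hm); auto using disj_sym).
    assert (dmr2 : disj m r2) by (apply (disj_par _ _ _ _ Hm); auto using disj_sym).
    split; [exact (disj_gam _ _ _ _ _ He dmr1)|].
    split; [exact (disj_gam _ _ _ _ _ He dmr2)|].
    split; [apply (lg _ _ _ _ _ He); [lamt|neq|neq]|].
    split; [apply (lg _ _ _ _ _ He); [lamt|neq|neq]|].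
    split; [neq|].
    unfold par3.
    assert (Hmr1 : par m r1 = Some q1).
    { destruct (par_some s1 r1 d1r1) as [k Hk].
      pose proof (Hassoc s0 s1 r1) as Ea. rewrite Hm, Hk in Ea. simpl in Ea.
      pose proof (Hassoc s0 r1 s1) as Eb. rewrite Hq0 in Eb; simpl in Eb. rewrite (Hcomm r1 s1), Hk, Hq1 in Eb.
      simpl in Eb. rewrite Ea, <- Eb. reflexivity. }
    assert (E1 : par e r1 = gam s02 s11 q1).
    { apply (par_gam_cor HA m r1 e q1 s02 s11); auto.
      apply HGam; [lamt|lamt|neq]. }
    rewrite E1.
    destruct (gam_some HGam q1 s02 s11) as [f Hf]; [lamt|lamt|neq|].
    rewrite Hf; simpl.
    assert (E2 : par f r2 = gam s02 s11 W).
    { apply (par_gam_cor HA q1 r2 f W s02 s11); auto.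
      apply HGam; [lamt|lamt|neq]. }
    rewrite E2, chain4.
    rewrite (gams_perm HA HGam _ Lc); [exact Hx| | flat_in | nodup].
    unfold Lc. apply perm_swap.
Qed.
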